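(* Let $\mathcal V$ be a $*$-vector space with a (not necessarily proper) matrix ordering $\{C_n\}_n$. For each $n$ let $J_n=\operatorname{span}(C_n\cap-C_n)\subseteq M_n(\mathcal V)$ and let $J=J_1$. Then $M_n(J)=J_n$ for every $n\in\mathbb N$.
   Context: A (not necessarily proper) matrix ordering is a sequence of cones $C_n\subseteq M_n(\mathcal V)_h$ (hermitian elements) with $\alpha^*C_n\alpha\subseteq C_m$ for all $\alpha\in M_{n,m}$ and all $n,m$. *)

(* Defs.v *)
From HB Require Import structures.
From mathcomp Require Import all_boot all_order all_algebra.
From mathcomp Require Import reals complex.
Set Implicit Arguments. Unset Strict Implicit. Unset Printing Implicit Defensive.
Import Order.TTheory GRing.Theory Num.Theory.
Local Open Scope ring_scope.
Local Open Scope complex_scope.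

Section Defs.
Variable R : realType.
Local Notation C := (R[i]).
Variable V : lmodType C.

Definition is_star (star : V -> V) : Prop :=
  (forall v, star (star v) = v) /\
  (forall (a : C) (u v : V), star (a *: u + v) = a^* *: star u + star v).

Definition mxstar (star : V -> V) n (X : 'M[V]_n) : 'M[V]_n :=
  \matrix_(i, j) star (X j i).

Definition hermitian (star : V -> V) n (X : 'M[V]_n) : Prop := mxstar star X = X.

Definition mxscale n (c : C) (X : 'M[V]_n) : 'M[V]_n := \matrix_(i, j) (c *: X i j).

(* alpha^* X alpha for alpha in M_{n,m}(C), X in M_n(V) *)
Definition mxcongr n m (alpha : 'M[C]_(n, m)) (X : 'M[V]_n) : 'M[V]_m :=
  \matrix_(k, l) \sum_(i < n) \sum_(j < n) ((alpha i k)^* * alpha j l) *: X i j.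

Definition is_cone n (K : 'M[V]_n -> Prop) : Prop :=
  K 0 /\ (forall X Y, K X -> K Y -> K (X + Y)) /\
  (forall (t : R) X, 0 <= t -> K X -> K (mxscale (t%:C) X)).

Definition matrix_ordering (star : V -> V) (Cn : forall n, 'M[V]_n -> Prop) : Prop :=
  (forall n, (0 < n)%N -> is_cone (Cn n)) /\
  (forall n X, (0 < n)%N -> Cn n X -> hermitian star X) /\
  (forall n m (alpha : 'M[C]_(n, m)) X, (0 < n)%N -> (0 < m)%N ->
       Cn n X -> Cn m (mxcongr alpha X)).

Definition mxspan n (S : 'M[V]_n -> Prop) (X : 'M[V]_n) : Prop :=
  exists s : seq (C * 'M[V]_n),
    (forall p, p \in s -> S p.2) /\ X = \sum_(p <- s) mxscale p.1 p.2.

Definition Jn (Cn : forall n, 'M[V]_n -> Prop) n : 'M[V]_n -> Prop :=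
  mxspan (fun X => Cn n X /\ Cn n (- X)).

(* J = J_1, viewed as a subset of V via the identification M_1(V) = V *)
Definition J1 (Cn : forall n, 'M[V]_n -> Prop) (v : V) : Prop :=
  @Jn Cn 1%N (const_mx v).

Definition Mn_of n (S : V -> Prop) (X : 'M[V]_n) : Prop := forall i j, S (X i j).

End Defs.
Arguments Jn {R V} Cn n _.
Arguments Mn_of {R V} n S X.

(* Main.v *)
Require Import Defs.
From HB Require Import structures.
From mathcomp Require Import all_boot all_order all_algebra.
From mathcomp Require Import reals complex ring.
Import Order.TTheory GRing.Theory Num.Theory.
Local Open Scope ring_scope.
Local Open Scope complex_scope.
Set Implicit Arguments. Unset Strict Implicit. Unset Printing Implicit Defensive.

Section S.
Variable R : realType.
Local Notation C := (R[i]).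
Variable V : lmodType C.

Definition Ls : seq C := [:: 1; -1; 'i; - 'i].
Definition av (l : C) (b c : bool) : C := ((b%:R : R)%:C) + l * ((c%:R : R)%:C).

Lemma polarb (b1 b2 b3 b4 : bool) :
  \sum_(l <- Ls) l^* * ((av l b1 b2)^* * av l b3 b4) = (if b1 && b4 then 4%:R else 0).
Proof.
rewrite /Ls /av !big_cons big_nil.
by case: b1; case: b2; case: b3; case: b4; apply/eqP; rewrite eq_complex /=;
  apply/andP; split; apply/eqP; ring.
Qed.

Lemma mxscaleD m c (X Y : 'M[V]_m) : mxscale c (X + Y) = mxscale c X + mxscale c Y.
Proof. by apply/matrixP=> a b; rewrite !mxE scalerDr. Qed.
Lemma mxscale_sum m I (r : seq I) c (F : I -> 'M[V]_m) :
  mxscale c (\sum_(x <- r) F x) = \sum_(x <- r) mxscale c (F x).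
Proof.
by apply/matrixP=> a b; rewrite !mxE !summxE scaler_sumr; apply: eq_bigr => x _; rewrite mxE.
Qed.
Lemma mxscaleA m c d (X : 'M[V]_m) : mxscale c (mxscale d X) = mxscale (c * d) X.
Proof. by apply/matrixP=> a b; rewrite !mxE scalerA. Qed.
Lemma mxscale1 m (X : 'M[V]_m) : mxscale 1 X = X.
Proof. by apply/matrixP=> a b; rewrite !mxE scale1r. Qed.

Section Span.
Variables (m : nat) (S : 'M[V]_m -> Prop).
Lemma span0 : mxspan S 0.
Proof. by exists [::]; split => //; rewrite big_nil. Qed.
Lemma span_mem X : S X -> mxspan S X.
Proof.
move=> SX; exists [:: (1, X)]; split; first by move=> p; rewrite inE => /eqP ->.
by rewrite big_cons big_nil addr0 mxscale1.
Qed.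
Lemma spanD X Y : mxspan S X -> mxspan S Y -> mxspan S (X + Y).
Proof.
move=> [s1 [H1 ->]] [s2 [H2 ->]]; exists (s1 ++ s2); split; last by rewrite big_cat.
by move=> p; rewrite mem_cat => /orP [/H1|/H2].
Qed.
Lemma spanZ c X : mxspan S X -> mxspan S (mxscale c X).
Proof.
move=> [s [H ->]]; exists [seq (c * p.1, p.2) | p <- s]; split.
  by move=> p /mapP [q /H Hq ->].
by rewrite mxscale_sum big_map; apply: eq_bigr => p _; rewrite mxscaleA.
Qed.
Lemma span_sum (I : eqType) (r : seq I) (F : I -> 'M[V]_m) :
  (forall x, x \in r -> mxspan S (F x)) -> mxspan S (\sum_(x <- r) F x).
Proof.
elim: r => [|x r IH] H; first by rewrite big_nil; exact: span0.
rewrite big_cons; apply: spanD; first by apply: H; rewrite inE eqxx.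
by apply: IH => y hy; apply: H; rewrite inE hy orbT.
Qed.
End Span.

Lemma mxcongrN n m (al : 'M[C]_(n, m)) (X : 'M[V]_n) :
  mxcongr al (- X) = - mxcongr al X.
Proof.
apply/matrixP=> a b; rewrite !mxE -sumrN; apply: eq_bigr => p _.
by rewrite -sumrN; apply: eq_bigr => q _; rewrite mxE scalerN.
Qed.

Definition acol n (i j : 'I_n) l : 'M[C]_(n, 1) := \matrix_(p, _) av l (p == i) (p == j).
Definition arow n (i j : 'I_n) l : 'M[C]_(1, n) := \matrix_(_, q) av l (q == i) (q == j).

Lemma sum_delta n (i j : 'I_n) (F : 'I_n -> 'I_n -> V) :
  \sum_p \sum_q (if (p == i) && (q == j) then F p q else 0) = F i j.
Proof.
rewrite (bigD1 i) //= [X in _ + X]big1 ?addr0; last first.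
  by move=> p /negbTE Hp; rewrite big1 // => q _; rewrite Hp.
by rewrite (bigD1 j) //= big1 ?addr0 ?eqxx // => q /negbTE Hq; rewrite Hq andbF.
Qed.

Lemma K1comp n (Y : 'M[V]_n) i j :
  \sum_(l <- Ls) l^* *: mxcongr (acol i j l) Y ord0 ord0 = 4%:R *: Y i j.
Proof.
transitivity (\sum_(l <- Ls) \sum_p \sum_q
   (l^* * ((av l (p == i) (p == j))^* * av l (q == i) (q == j))) *: Y p q).
  apply: eq_bigr => l _; rewrite mxE scaler_sumr; apply: eq_bigr => p _.
  by rewrite scaler_sumr; apply: eq_bigr => q _; rewrite !mxE scalerA.
rewrite exchange_big /=.
transitivity (\sum_p \sum_q (\sum_(l <- Ls)
   (l^* * ((av l (p == i) (p == j))^* * av l (q == i) (q == j)))) *: Y p q).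
  apply: eq_bigr => p _; rewrite exchange_big /=; apply: eq_bigr => q _.
  by rewrite scaler_suml.
rewrite -(sum_delta i j (fun p q => 4%:R *: Y p q)).
apply: eq_bigr => p _; apply: eq_bigr => q _.
by rewrite polarb; case: ifP => _; rewrite ?scale0r.
Qed.

Definition delta n (i j : 'I_n) (v : V) : 'M[V]_n :=
  \matrix_(p, q) (if (p == i) && (q == j) then v else 0).

Lemma K2comp n (z : 'M[V]_1) (i j : 'I_n) :
  \sum_(l <- Ls) mxscale l^* (mxcongr (arow i j l) z) = mxscale 4%:R (delta i j (z ord0 ord0)).
Proof.
apply/matrixP => p q; rewrite summxE !mxE.
transitivity (\sum_(l <- Ls)
   (l^* * ((av l (p == i) (p == j))^* * av l (q == i) (q == j))) *: z ord0 ord0).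
  apply: eq_bigr => l _; rewrite !mxE !big_ord1 !mxE scalerA //.
rewrite -scaler_suml polarb; case: ifP => _; by rewrite ?scale0r ?scaler0.
Qed.

Lemma decomp n (X : 'M[V]_n) : X = \sum_i \sum_j delta i j (X i j).
Proof.
apply/matrixP => p q; rewrite summxE.
under eq_bigr do rewrite summxE.
under eq_bigr do under eq_bigr do rewrite mxE.
rewrite -(sum_delta p q (fun a b => X a b)).
apply: eq_bigr => a _; apply: eq_bigr => b _.
by rewrite [p == a]eq_sym [q == b]eq_sym; case: ifP => // /andP [/eqP -> /eqP ->].
Qed.

Section Main.
Variable Cn : forall n, 'M[V]_n -> Prop.
Arguments Cn : clear implicits.
Hypothesis hcong : forall n m (alpha : 'M[C]_(n, m)) X, (0 < n)%N -> (0 < m)%N ->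
       Cn n X -> Cn m (mxcongr alpha X).

Lemma four_neq0 : (4%:R : C) != 0.
Proof. by rewrite pnatr_eq0. Qed.

Lemma K1 n (n0 : (0 < n)%N) (Y : 'M[V]_n) : Cn n Y -> Cn n (- Y) ->
  forall i j, Jn Cn 1 (const_mx (Y i j)).
Proof.
move=> h1 h2 i j.
have -> : const_mx (Y i j) =
   mxscale (4%:R^-1) (\sum_(l <- Ls) mxscale l^* (mxcongr (acol i j l) Y)) :> 'M[V]_1.
  apply/matrixP => a b; rewrite !ord1 !mxE summxE.
  under eq_bigr do rewrite mxE.
  by rewrite K1comp scalerA mulVf ?scale1r // four_neq0.
apply: spanZ; apply: span_sum => l _; apply: spanZ; apply: span_mem; split.
  exact: hcong.
by rewrite -mxcongrN; apply: hcong.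
Qed.

Lemma K2 n (n0 : (0 < n)%N) (z : 'M[V]_1) : Cn 1 z -> Cn 1 (- z) ->
  forall i j : 'I_n, Jn Cn n (delta i j (z ord0 ord0)).
Proof.
move=> h1 h2 i j.
have -> : delta i j (z ord0 ord0) =
   mxscale (4%:R^-1) (\sum_(l <- Ls) mxscale l^* (mxcongr (arow i j l) z)).
  by rewrite K2comp mxscaleA mulVf ?mxscale1 // four_neq0.
apply: spanZ; apply: span_sum => l _; apply: spanZ; apply: span_mem; split.
  exact: hcong.
by rewrite -mxcongrN; apply: hcong.
Qed.

Lemma mainlem n (n0 : (0 < n)%N) (X : 'M[V]_n) : Mn_of n (J1 Cn) X <-> Jn Cn n X.
Proof.
split.
  move=> HX; rewrite (decomp X).
  apply: span_sum => i _; apply: span_sum => j _.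
  case: (HX i j) => s [Hs Hx].
  have e : X i j = \sum_(p <- s) p.1 *: p.2 ord0 ord0.
    have := congr1 (fun M : 'M[V]_1 => M ord0 ord0) Hx.
    rewrite /= mxE summxE => ->; apply: eq_bigr => p _; by rewrite mxE.
  have -> : delta i j (X i j) = \sum_(p <- s) mxscale p.1 (delta i j (p.2 ord0 ord0)).
    apply/matrixP => a b; rewrite [RHS]summxE [LHS]mxE.
    case: ifP => h; first by rewrite e; apply: eq_bigr => p _; rewrite !mxE h.
    by rewrite big1 // => p _; rewrite !mxE h scaler0.
  apply: span_sum => p hp; apply: spanZ; case: (Hs p hp) => h1 h2; exact: K2.
move=> [s [Hs ->]] i j; rewrite /J1.
have -> : const_mx ((\sum_(p <- s) mxscale p.1 p.2) i j) =
    \sum_(p <- s) mxscale p.1 (const_mx (p.2 i j)) :> 'M[V]_1.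
  apply/matrixP => a b; rewrite !mxE !summxE; apply: eq_bigr => p _; by rewrite !mxE.
apply: span_sum => p hp; apply: spanZ; case: (Hs p hp) => h1 h2; exact: K1 h1 h2 i j.
Qed.
End Main.
End S.

Theorem lemma4p2 (R : realType) (V : lmodType R[i]) (star : V -> V)
  (Cn : forall n, 'M[V]_n -> Prop) :
  is_star star -> matrix_ordering star Cn ->
  forall n : nat, (0 < n)%N ->
    forall X : 'M[V]_n, Mn_of n (J1 Cn) X <-> Jn Cn n X.
Proof.
move=> _ [_ [_ hcong]] n n0 X; exact: mainlem.
Qed.
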